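(* Let $P_1\subseteq P_2$ be meet semilattices with $0$ such that $P_1\subseteq P_2$ preserves finite covers. Suppose that for every $x\in P_2$ such that some element of $P_1$ is $\ge x$, there exist $y\in P_1$ with $x\le y$ and a finite set $\{y_1,\dots,y_n\}\subseteq P_1$ with $y_i\le y$ and $y_i\wedge x=0$ for all $i$, such that $\{y_1,\dots,y_n,x\}$ is a finite cover of $y$ in $P_2$. Then $P_1\subseteq P_2$ is tight, i.e. the image of the injective generalized Boolean algebra morphism $\mathcal T_c(P_1)\hookrightarrow\mathcal T_c(P_2)$, $U\mapsto re^{-1}(U)$, is an ideal of $\mathcal T_c(P_2)$.
   Context: A meet semilattice with $0$ is a meet semilattice with least element $0$; $P_1\subseteq P_2$ means an injective meet- and $0$-preserving map identifying $P_1$ with a subset of $P_2$. A filter of $P$ is a subset $F$ with $\emptyset\ne F\ne P$, closed upwards and under $\wedge$; $F(P)$ has the topology generated by $U_x=\{F:x\in F\}$, with basis of compact open sets $U_{(x:x_1,\dots,x_n)}=\{F:x\in F,\ x_1,\dots,x_n\notin F\}$. The tight filters $T(P)$ are the closure of the ultrafilters (maximal filters) in $F(P)$; $V^P_{(x:x_1,\dots,x_n)}=U_{(x:x_1,\dots,x_n)}\cap T(P)$, $V^P_x=V^P_{(x:)}$. $\mathcal T_c(P)$ is the generalized Boolean algebra of compact open subsets of the Hausdorff space $T(P)$. A finite cover of $x\in P$ is a finite set of elements $\le x$ such that every $0\ne y\le x$ meets one of them nontrivially. $P_1\subseteq P_2$ preserves finite covers if every finite cover in $P_1$ of $x\in P_1$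 is a finite cover of $x$ in $P_2$; in that case $re:\xi\mapsto\xi\cap P_1$ is a partial map $T(P_2)\dashrightarrow T(P_1)$ (defined when $\xi\cap P_1\ne\emptyset$), and $U\mapsto re^{-1}(U)$ is an injective generalized Boolean algebra morphism $\mathcal T_c(P_1)\to\mathcal T_c(P_2)$ sending $V^{P_1}_{(x:x_1,\dots,x_n)}\mapsto V^{P_2}_{(x:x_1,\dots,x_n)}$. An ideal of a generalized Boolean algebra $\mathcal B$ is a subset closed under joins and under meets with arbitrary elements of $\mathcal B$. *)

(* Defs.v *)
From Stdlib Require Import List.
From mathcomp Require Import all_boot all_order.
Set Implicit Arguments.
Unset Strict Implicit.
Unset Printing Implicit Defensive.
Import Order.TTheory.
Local Open Scope order_scope.

Section Semilattice.
Context {d : Order.disp_t} (P : bMeetSemilatticeType d).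

Definition is_filter (F : P -> Prop) : Prop :=
  (exists x, F x) /\ (exists x, ~ F x) /\
  (forall x y : P, F x -> x <= y -> F y) /\
  (forall x y : P, F x -> F y -> F (x `&` y)).

Definition is_ultrafilter (F : P -> Prop) : Prop :=
  is_filter F /\
  forall G : P -> Prop, is_filter G -> (forall x, F x -> G x) ->
    forall x, G x -> F x.

(* Points of F(P) are filters; subsets of F(P) are predicates on P -> Prop. *)
Definition fset := (P -> Prop) -> Prop.

Definition Ubasic (x : P) (xs : seq P) : fset :=
  fun F => F x /\ forall y, y \in xs -> ~ F y.

Definition openF (O : fset) : Prop :=
  (forall F, O F -> is_filter F) /\
  forall F, O F -> exists x xs, Ubasic x xs F /\
     forall G, is_filter G -> Ubasic x xs G -> O G.

(* Tight filters: closure of the set of ultrafilters in F(P). *)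
Definition is_tight (F : P -> Prop) : Prop :=
  is_filter F /\
  forall O : fset, openF O -> O F -> exists G, O G /\ is_ultrafilter G.

Definition Vbasic (x : P) (xs : seq P) : fset :=
  fun F => Ubasic x xs F /\ is_tight F.

Definition openT (W : fset) : Prop :=
  (forall F, W F -> is_tight F) /\
  forall F, W F -> exists x xs, Vbasic x xs F /\
     forall G, Vbasic x xs G -> W G.

Definition compactT (W : fset) : Prop :=
  forall (I : Type) (O : I -> fset), (forall i, openT (O i)) ->
    (forall F, W F -> exists i, O i F) ->
    exists s : seq I, forall F, W F -> exists i, List.In i s /\ O i F.

Definition Tc (W : fset) : Prop := openT W /\ compactT W.

Definition finite_cover (x : P) (C : seq P) : Prop :=
  (forall c, c \in C -> c <= x) /\
  forall y : P, y != \bot -> y <= x -> exists2 c, c \in C & y `&` c != \bot.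

End Semilattice.

Section Embedding.
Context {d1 d2 : Order.disp_t}
  (P1 : bMeetSemilatticeType d1) (P2 : bMeetSemilatticeType d2).

(* P1 ⊆ P2: injective meet- and 0-preserving map. *)
Definition semilattice_embedding (f : P1 -> P2) : Prop :=
  injective f /\ (forall x y, f (x `&` y) = f x `&` f y) /\ f \bot = \bot.

Definition preserves_finite_covers (f : P1 -> P2) : Prop :=
  forall (x : P1) (C : seq P1), finite_cover x C -> finite_cover (f x) (map f C).

Definition re_preimage (f : P1 -> P2) (U : fset P1) : fset P2 :=
  fun xi => is_tight xi /\ (exists a, xi (f a)) /\ U (fun a => xi (f a)).

Definition set_eq {T : Type} (A B : T -> Prop) : Prop := forall t, A t <-> B t.

Definition in_re_image (f : P1 -> P2) (W : fset P2) : Prop :=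
  exists U, Tc U /\ set_eq W (re_preimage f U).

Definition is_ideal_Tc (I : fset P2 -> Prop) : Prop :=
  (forall W, I W -> Tc W) /\
  (forall W1 W2, I W1 -> I W2 -> I (fun xi => W1 xi \/ W2 xi)) /\
  (forall W V, I W -> Tc V -> I (fun xi => W xi /\ V xi)).

End Embedding.

(* Main.v *)
Require Import Defs.
From mathcomp Require Import all_boot all_order.
From mathcomp Require Import classical_sets boolp.
From Stdlib Require Import Classical.
Set Implicit Arguments.
Unset Strict Implicit.
Import Order.TTheory.
Local Open Scope order_scope.

Section Basics.
Context {d : Order.disp_t} (P : bMeetSemilatticeType d).
Implicit Types (F G : P -> Prop) (x y z : P).

Lemma filter_bot F : is_filter F -> ~ F \bot.
Proof. by move=> [_ [[y ny] [up _]]] Fb; apply: ny; apply: (up _ _ Fb); exact: le0x. Qed.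

Lemma filter_up F x y : is_filter F -> F x -> x <= y -> F y.
Proof. by move=> [_ [_ [up _]]]; apply: up. Qed.

Lemma filter_meet F x y : is_filter F -> F x -> F y -> F (x `&` y).
Proof. by move=> [_ [_ [_ me]]]; apply: me. Qed.

Lemma meet_bot_le x y z : z <= y -> x `&` y = \bot -> x `&` z = \bot.
Proof.
move=> zy xy; apply/eqP; rewrite -lex0 -xy; apply: leI2 => //.
Qed.

Lemma ultra_char F z : is_ultrafilter F ->
  (forall u, F u -> z `&` u != \bot) -> F z.
Proof.
move=> [fF maxF] H.
pose G u := exists w, F w /\ z `&` w <= u.
have fG : is_filter G.
  have [[w Fw] _] := fF.
  split; first by exists (z `&` w); exists w.
  split; first exists \bot.
    move=> [w' [Fw' le]]; move: (H _ Fw'); rewrite -lex0 le //.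
  split; first by move=> a b [w' [Fw' le]] ab; exists w'; split=> //; exact: le_trans ab.
  move=> a b [w1 [F1 l1]] [w2 [F2 l2]]; exists (w1 `&` w2); split.
    exact: filter_meet.
  rewrite lexI; apply/andP; split.
    apply: le_trans l1; apply: leI2 => //; exact: leIl.
  apply: le_trans l2; apply: leI2 => //; exact: leIr.
apply: (maxF G fG).
  by move=> w Fw; exists w; split=> //; exact: leIr.
have [[w Fw] _] := fF; exists w; split=> //; exact: leIl.
Qed.

Lemma ultra_neg F z : is_ultrafilter F -> ~ F z -> exists u, F u /\ z `&` u = \bot.
Proof.
move=> uF nz; apply: NNPP => nex; apply: nz; apply: ultra_char => // u Fu.
by apply/eqP => e; apply: nex; exists u.
Qed.

Lemma ultra_avoid F x (C : seq P) : is_ultrafilter F -> F x ->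
  (forall c, c \in C -> ~ F c) ->
  exists w, F w /\ w <= x /\ forall c, c \in C -> w `&` c = \bot.
Proof.
move=> uF Fx; elim: C => [|c C IH] H.
  by exists x; split=> //; split=> //.
have [w [Fw [wx wC]]] : exists w, F w /\ w <= x /\ forall c, c \in C -> w `&` c = \bot.
  by apply: IH => c' cC; apply: H; rewrite inE cC orbT.
have [u [Fu cu]] := ultra_neg uF (H c (mem_head _ _)).
exists (w `&` u); split; first by apply: filter_meet => //; case: uF.
split; first by apply: le_trans wx; exact: leIl.
move=> c'; rewrite inE => /orP [/eqP ->|c'C].
  by rewrite meetC; apply: (meet_bot_le (leIr _ _)).
by rewrite meetC; apply: (meet_bot_le (leIl _ _)); rewrite meetC; apply: wC.
Qed.

Lemma ultra_cover F x (C : seq P) : is_ultrafilter F -> F x -> finite_cover x C ->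
  exists2 c, c \in C & F c.
Proof.
move=> uF Fx [Cle Ccov]; apply: NNPP => nex.
have [w [Fw [wx wC]]] := ultra_avoid uF Fx (C := C) (fun c cC Fc => nex (ex_intro2 _ _ c cC Fc)).
have wn : w != \bot by apply/eqP => e; apply: (filter_bot (proj1 uF)); rewrite -e.
have [c cC] := Ccov w wn wx; by rewrite (wC c cC) eqxx.
Qed.

Lemma tight_cover F x (C : seq P) : is_tight F -> F x -> finite_cover x C ->
  exists2 c, c \in C & F c.
Proof.
move=> [fF tF] Fx cov; apply: NNPP => nex.
pose O : fset P := fun G => is_filter G /\ Ubasic x C G.
have oO : openF O.
  split; first by move=> G [].
  by move=> G [_ UG]; exists x, C; split.
have [G [[_ [Gx GC]] uG]] := tF O oO (conj fF (conj Fx (fun c cC Fc => nex (ex_intro2 _ _ c cC Fc)))).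
have [c cC Gc] := ultra_cover uG Gx cov.
exact: GC cC Gc.
Qed.

End Basics.

Section Ultra.
Context {d : Order.disp_t} (P : bMeetSemilatticeType d).
Implicit Types (F G : P -> Prop) (x y z : P).

Lemma ultra_exists F0 : is_filter F0 -> exists H, is_ultrafilter H /\ forall x, F0 x -> H x.
Proof.
move=> fF0.
pose Q : set (set P) := fun A => (forall x, ~ A x) \/ (is_filter A /\ forall x, F0 x -> A x).
have [A [QA maxA]] : exists A, Q A /\ forall B, (A `<` B)%classic -> ~ Q B.
  apply: Zorn_bigcup => Fam FQ tot.
  case: (classic (exists X, Fam X /\ exists x, X x)) => [[X0 [FX0 [x0 X0x0]]]|none]; last first.
    left=> x [X FX Xx]; apply: none; by exists X; split=> //; exists x.
  have fX0 : is_filter X0 /\ forall x, F0 x -> X0 x.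
    case: (FQ _ FX0) => // e; by case: (e x0).
  have memf X x : Fam X -> X x -> is_filter X.
    by move=> FX Xx; case: (FQ _ FX) => [e|[]//]; case: (e x).
  right; split; last first.
    by move=> x F0x; exists X0 => //; apply: (proj2 fX0).
  split; first by exists x0; exists X0.
  split.
    exists \bot => [[X FX Xb]]; exact: (filter_bot (memf _ _ FX Xb) Xb).
  split.
    move=> a b [X FX Xa] ab; exists X => //; exact: (filter_up (memf _ _ FX Xa) Xa ab).
  move=> a b [X FX Xa] [Y FY Yb].
  case: (tot _ _ FX FY) => [XY|YX].
    exists Y => //; apply: (filter_meet (memf _ _ FY Yb)) => //; exact: XY.
  exists X => //; apply: (filter_meet (memf _ _ FX Xa)) => //; exact: YX.
case: QA => [empty|[fA F0A]].
  exfalso; apply: (maxA F0); last by right; split.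
  have [[x F0x] _] := fF0.
  split; first by move=> t At; case: (empty t).
  by move=> sub; apply: (empty x); apply: sub.
exists A; split=> //; split=> // G fG AG x Gx.
apply: NNPP => nAx; apply: (maxA G); last by right; split=> // t /F0A /AG.
split=> //; by move=> sub; apply: nAx; apply: sub.
Qed.

Lemma principal_filter z : z != \bot -> is_filter (fun u => z <= u).
Proof.
move=> zn; split; first by exists z.
split; first by exists \bot; rewrite lex0; apply/negP.
split; first by move=> a b za ab; exact: le_trans ab.
by move=> a b za zb; rewrite lexI za zb.
Qed.

End Ultra.

Section Compact.
Context {d : Order.disp_t} (P : bMeetSemilatticeType d).
Implicit Types (F G : P -> Prop) (x y z : P).

Definition fincov (I : Type) (O : I -> fset P) (A : fset P) :=
  exists s : seq I, forall F, A F -> exists i, List.In i s /\ O i F.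

Definition cyl x xs (s : seq (P * bool)) : fset P :=
  fun F => Vbasic x xs F /\ forall pb, pb \in s -> (F pb.1 <-> pb.2).

Lemma chain_fin (Fam : set (set (P * bool))) (s : seq (P * bool)) :
  total_on Fam subset ->
  (forall pb, pb \in s -> exists2 X, Fam X & X pb) ->
  s = [::] \/ exists X, Fam X /\ forall pb, pb \in s -> X pb.
Proof.
move=> tot; elim: s => [|q s IH] H; first by left.
right; have [X0 FX0 X0q] := H q (mem_head _ _).
case: IH => [pb pbs|->|[X [FX Xs]]].
- by apply: H; rewrite inE pbs orbT.
- exists X0; split=> // pb; rewrite inE => /eqP -> //.
case: (tot _ _ FX0 FX) => [X0X|XX0].
  exists X; split=> // pb; rewrite inE => /orP [/eqP ->|/Xs //]; exact: X0X.
exists X0; split=> // pb; rewrite inE => /orP [/eqP -> //|/Xs]; exact: XX0.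
Qed.

Lemma sel_mem (a : P) (bs : seq P) F :
  F a -> (forall q, q \in bs -> ~ F q) ->
  forall pb, pb \in (a, true) :: map (fun q => (q, false)) bs -> (F pb.1 <-> pb.2).
Proof.
move=> Fa Fbs pb; rewrite inE => /orP [/eqP ->|/mapP [q qbs ->]] /=.
  by split.
by split=> // /(Fbs _ qbs).
Qed.

Lemma sel_cyl x xs (a : P) (bs : seq P) F :
  cyl x xs ((a, true) :: map (fun q => (q, false)) bs) F ->
  F a /\ forall q, q \in bs -> ~ F q.
Proof.
move=> [_ H]; split; first by apply/(H (a, true)); rewrite ?mem_head.
move=> q qbs Fq; have /H /= [h _] : (q, false) \in (a, true) :: map (fun q => (q, false)) bs.
  by rewrite inE; apply/orP; right; apply/mapP; exists q.
by have := h Fq.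
Qed.

Lemma compact_basic x xs : compactT (Vbasic x xs).
Proof.
move=> I O Oopen cover; apply: NNPP => nfin.
pose bad : set (set (P * bool)) := fun A =>
  forall s, (forall pb, pb \in s -> A pb) -> ~ fincov O (cyl x xs s).
have [M [badM maxM]] : exists M, bad M /\ forall B, (M `<` B)%classic -> ~ bad B.
  apply: Zorn_bigcup => Fam Fbad tot s sin.
  case: (chain_fin tot (s := s)) => [pb /sin [X FX Xpb]|->|[X [FX Xs]]].
  - by exists X.
  - move=> [t Ht]; apply: nfin; exists t => F VF; apply: Ht; split=> //.
  - exact: (Fbad _ FX s Xs).
have emptyM s : (forall pb, pb \in s -> M pb) -> (forall F, ~ cyl x xs s F) -> False.
  by move=> sM e; apply: (badM s sM); exists [::] => F /e.
have notbad B : (M `<` B)%classic -> exists s, (forall pb, pb \in s -> B pb) /\ fincov O (cyl x xs s).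
  move=> MB; apply: NNPP => ne; apply: (maxM B MB) => s sB fc.
  by apply: ne; exists s.
have both p : M (p, true) \/ M (p, false).
  apply: NNPP => nb.
  have nt : ~ M (p, true) by move=> h; apply: nb; left.
  have nf : ~ M (p, false) by move=> h; apply: nb; right.
  have prop b : ~ M (p, b) -> (M `<` (fun q => M q \/ q = (p, b)))%classic.
    move=> nM; split; first by rewrite /subset => q Mq; left.
    by move=> sub; apply: nM; apply: sub; right.
  have [s1 [s1B [t1 Ht1]]] := notbad _ (prop true nt).
  have [s2 [s2B [t2 Ht2]]] := notbad _ (prop false nf).
  pose s := [seq q <- s1 | q != (p, true)] ++ [seq q <- s2 | q != (p, false)].
  apply: (badM s).
    move=> q; rewrite mem_cat !mem_filter => /orP [/andP [qn /s1B]|/andP [qn /s2B]].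
      by case=> // e; move: qn; rewrite e eqxx.
    by case=> // e; move: qn; rewrite e eqxx.
  exists (t1 ++ t2) => F [VF HF].
  case: (classic (F p)) => Fp.
    have [i [it Oi]] : exists i, List.In i t1 /\ O i F.
      apply: Ht1; split=> // q qs1.
      case: (eqVneq q (p, true)) => [->|qn] /=; first by split.
      by apply: HF; rewrite mem_cat !mem_filter qn qs1.
    by exists i; split=> //; apply: List.in_or_app; left.
  have [i [it Oi]] : exists i, List.In i t2 /\ O i F.
    apply: Ht2; split=> // q qs2.
    case: (eqVneq q (p, false)) => [->|qn] /=; first by split.
    by apply: HF; rewrite mem_cat !mem_filter qn qs2 orbT.
  by exists i; split=> //; apply: List.in_or_app; right.
have inM p (b : bool) : (if b then M (p, true) else ~ M (p, true)) -> M (p, b).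
  case: b => //= nt; by case: (both p).
pose F0 p := M (p, true).
have mem1 s F pb : cyl x xs s F -> pb \in s -> (F pb.1 <-> pb.2).
  by move=> [_ H]; apply: H.
have Mlist s : (forall pb, pb \in s -> if pb.2 then F0 pb.1 else ~ F0 pb.1) ->
    forall pb, pb \in s -> M pb.
  by move=> H [p b] /H /=; apply: inM.
have F0x : F0 x.
  apply: NNPP => nx; apply: (emptyM [:: (x, false)]).
    by apply: Mlist => pb; rewrite inE => /eqP ->.
  move=> F cF; have := mem1 _ _ _ cF (mem_head _ _) => /= [[h _]].
  by have := h (proj1 (proj1 (proj1 cF))).
have F0bot : ~ F0 \bot.
  move=> Fb; apply: (emptyM [:: (\bot, true)]).
    by apply: Mlist => pb; rewrite inE => /eqP ->.
  move=> F cF; have := mem1 _ _ _ cF (mem_head _ _) => /= [[_ h]].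
  exact: (filter_bot (proj1 (proj2 (proj1 cF))) (h isT)).
have filtF0 : is_filter F0.
  split; first by exists x.
  split; first by exists \bot.
  split.
    move=> a b Fa ab; apply: NNPP => nb; apply: (emptyM [:: (a, true); (b, false)]).
      by apply: Mlist => pb; rewrite !inE => /orP [/eqP ->|/eqP ->].
    move=> F cF.
    have /= [_ Fa'] := mem1 _ _ (a, true) cF (mem_head _ _).
    have /= [Fb' _] := mem1 _ _ (b, false) cF ltac:(by rewrite !inE eqxx orbT).
    suff hb : F b by have := Fb' hb.
    apply: (filter_up (proj1 (proj2 (proj1 cF)))) ab; exact: Fa'.
  move=> a b Fa Fb; apply: NNPP => nb; apply: (emptyM [:: (a, true); (b, true); (a `&` b, false)]).
    by apply: Mlist => pb; rewrite !inE => /orP [/eqP ->|/orP [/eqP ->|/eqP ->]].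
  move=> F cF.
  have /= [_ Fa'] := mem1 _ _ (a, true) cF (mem_head _ _).
  have /= [_ Fb'] := mem1 _ _ (b, true) cF ltac:(by rewrite !inE eqxx orbT).
  have /= [Fab' _] := mem1 _ _ (a `&` b, false) cF ltac:(by rewrite !inE eqxx !orbT).
  suff hb : F (a `&` b) by have := Fab' hb.
  apply: (filter_meet (proj1 (proj2 (proj1 cF)))); [exact: Fa'|exact: Fb'].
have F0xs : forall q, q \in xs -> ~ F0 q.
  move=> q qxs Fq; apply: (emptyM [:: (q, true)]).
    by apply: Mlist => pb; rewrite inE => /eqP ->.
  move=> F cF; have := mem1 _ _ _ cF (mem_head _ _) => /= [[_ h]].
  exact: (proj2 (proj1 (proj1 cF)) q qxs (h isT)).
have selM (a : P) (bs : seq P) : F0 a -> (forall q, q \in bs -> ~ F0 q) ->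
    forall pb, pb \in (a, true) :: map (fun q => (q, false)) bs -> M pb.
  move=> Fa Fbs; apply: Mlist => pb; rewrite inE => /orP [/eqP ->|/mapP [q qbs ->]] //=.
  exact: Fbs.
have tF0 : is_tight F0.
  split=> // O' [hO oO'] O'F0.
  have [a [bs [[Fa Fbs] sub]]] := oO' F0 O'F0.
  apply: NNPP => nu; apply: (emptyM _ (selM a bs Fa Fbs)).
  move=> F cF; have [Fa' Fbs'] := sel_cyl cF.
  have tF : is_tight F := proj2 (proj1 cF).
  have [G [O'G uG]] := proj2 tF O' (conj hO oO') (sub F (proj1 tF) (conj Fa' Fbs')).
  by apply: nu; exists G.
have VF0 : Vbasic x xs F0 by split=> //; split.
have [i Oi] := cover F0 VF0.
have [b [bs [[[Fb Fbs] _] sub]]] := proj2 (Oopen i) F0 Oi.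
apply: (badM _ (selM b bs Fb Fbs)); exists [:: i] => F cF.
exists i; split; first by left.
have [Fb' Fbs'] := sel_cyl cF.
apply: sub; split; last exact: (proj2 (proj1 cF)).
by split.
Qed.

End Compact.

Lemma fset_eq (T : Type) (A B : T -> Prop) : (forall t, A t <-> B t) -> A = B.
Proof. by move=> H; apply: funext => t; apply: propext. Qed.

Section Lists.
Context {d : Order.disp_t} (P : bMeetSemilatticeType d).
Implicit Types (F G : P -> Prop) (x y z : P).

Definition denote (L : list (P * seq P)) : fset P :=
  fun F => exists p, List.In p L /\ Vbasic p.1 p.2 F.

Lemma compact_union (A B C : fset P) : compactT A -> compactT B ->
  (forall F, C F <-> A F \/ B F) -> compactT C.
Proof.
move=> cA cB eq I O Oo cov.
have [s1 H1] := cA I O Oo (fun F AF => cov F (proj2 (eq F) (or_introl AF))).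
have [s2 H2] := cB I O Oo (fun F BF => cov F (proj2 (eq F) (or_intror BF))).
exists (s1 ++ s2) => F /eq [/H1|/H2] [i [it Oi]]; exists i; split=> //;
  apply: List.in_or_app; [left|right] => //.
Qed.

Lemma compact_empty (C : fset P) : (forall F, ~ C F) -> compactT C.
Proof. by move=> e I O _ _; exists [::] => F /e. Qed.

Lemma Tc_basic x xs : Tc (Vbasic x xs).
Proof.
split; last exact: compact_basic.
split; first by move=> F [].
by move=> F VF; exists x, xs; split.
Qed.

Lemma Tc_denote L : Tc (denote L).
Proof.
split.
  split; first by move=> F [p [_ [_ t]]].
  by move=> F [p [pL Vp]]; exists p.1, p.2; split=> // G VG; exists p.
elim: L => [|p L IH]; first by apply: compact_empty => F [p []].
apply: (@compact_union (Vbasic p.1 p.2) (denote L) (denote (p :: L)) (compact_basic (x:=p.1) (xs:=p.2)) IH) => F; split.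
  move=> [q [[<-|qL] Vq]]; [by left|right; by exists q].
by move=> [Vp|[q [qL Vq]]]; [exists p; split=> //; left|exists q; split=> //; right].
Qed.

Lemma Tc_decomp W : Tc W -> exists L, forall F, W F <-> denote L F.
Proof.
move=> [[tW oW] cW].
pose I := {p : P * seq P | forall G, Vbasic p.1 p.2 G -> W G}.
pose O (i : I) := Vbasic (sval i).1 (sval i).2.
have cov : forall F, W F -> exists i, O i F.
  move=> F WF; have [x [xs [Vx sub]]] := oW F WF.
  by exists (exist _ (x, xs) sub).
have [s Hs] := cW I O (fun i => proj1 (@Tc_basic (sval i).1 (sval i).2)) cov.
exists (List.map (@sval _ _) s) => F; split.
  move=> /Hs [i [iis Oi]]; exists (sval i); split=> //; exact: List.in_map.
move=> [p [/List.in_map_iff [i [<- _]] Vp]]; exact: (svalP i).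
Qed.

Lemma Vbasic_meet x xs y ys F :
  Vbasic (x `&` y) (xs ++ ys) F <-> Vbasic x xs F /\ Vbasic y ys F.
Proof.
split.
  move=> [[Fxy Fn] tF]; have fF := proj1 tF.
  split; split=> //; split.
  - exact: filter_up Fxy (leIl _ _).
  - by move=> q qxs; apply: Fn; rewrite mem_cat qxs.
  - exact: filter_up Fxy (leIr _ _).
  - by move=> q qys; apply: Fn; rewrite mem_cat qys orbT.
move=> [[[Fx Fxs] tF] [[Fy Fys] _]]; split=> //; split.
  exact: filter_meet (proj1 tF) Fx Fy.
by move=> q; rewrite mem_cat => /orP [/Fxs|/Fys].
Qed.

Lemma denote_app L1 L2 F : denote (L1 ++ L2) F <-> denote L1 F \/ denote L2 F.
Proof.
split.
  by move=> [p [/List.in_app_iff [h|h] Vp]]; [left|right]; exists p.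
by move=> [[p [h Vp]]|[p [h Vp]]]; exists p; split=> //; apply/List.in_app_iff; [left|right].
Qed.

Lemma denote_meet (q : P * seq P) L F :
  denote (List.map (fun r => (r.1 `&` q.1, r.2 ++ q.2)) L) F <-> denote L F /\ Vbasic q.1 q.2 F.
Proof.
split.
  move=> [p [/List.in_map_iff [r [<- rL]]]] /= /Vbasic_meet [Vr Vq].
  by split=> //; exists r.
move=> [[r [rL Vr]] Vq]; exists (r.1 `&` q.1, r.2 ++ q.2); split.
  by apply/List.in_map_iff; exists r.
by apply/Vbasic_meet.
Qed.

End Lists.


Lemma inP_list (T : eqType) (x : T) (s : seq T) : x \in s <-> List.In x s.
Proof.
elim: s => [|y s IH] //=; rewrite inE; split.
  by move=> /orP [/eqP ->|/IH]; [left|right].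
by move=> [->|/IH ->]; rewrite ?eqxx ?orbT.
Qed.

Lemma denote_compl {d} (P : bMeetSemilatticeType d) (L : list (P * seq P)) z zs F :
  is_tight F ->
  (denote (List.flat_map (fun p => (p.1, z :: p.2) :: List.map (fun zj => (p.1 `&` zj, p.2)) zs) L) F
   <-> denote L F /\ ~ Vbasic z zs F).
Proof.
move=> tF; split.
  move=> [q [/List.in_flat_map [p [pL qp]] Vq]].
  move: qp => /= [e|/List.in_map_iff [zj [e zjs]]]; subst q.
    move: Vq => [[Fp Fn] _] /=; split.
      exists p; split=> //; split; last exact: tF.
      split=> // y yp; apply: Fn; by rewrite inE yp orbT.
    by move=> [[Fz _] _]; exact: (Fn z (mem_head _ _) Fz).
  move: Vq => [[Fpz Fn] _] /=; split.
    exists p; split=> //; split=> //; split=> //.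
    exact: filter_up (proj1 tF) Fpz (leIl _ _).
  move=> [[_ Fzs] _]; apply: (Fzs zj); first exact/inP_list.
  exact: filter_up (proj1 tF) Fpz (leIr _ _).
move=> [[p [pL [[Fp Fn] _]]] nV].
case: (classic (F z)) => Fz.
  have [zj [zjs Fzj]] : exists zj, zj \in zs /\ F zj.
    apply: NNPP => ne; apply: nV; split=> //; split=> // y ys Fy; apply: ne; by exists y.
  exists (p.1 `&` zj, p.2); split.
    apply/List.in_flat_map; exists p; split=> //; right.
    by apply/List.in_map_iff; exists zj; split=> //; apply/inP_list.
  split=> //; split=> //; exact: filter_meet (proj1 tF) Fp Fzj.
exists (p.1, z :: p.2); split.
  by apply/List.in_flat_map; exists p; split=> //; left.
split=> //; split=> // y; rewrite inE => /orP [/eqP ->|/Fn] //.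
Qed.

Section Emb.
Context {d1 d2 : Order.disp_t}
  (P1 : bMeetSemilatticeType d1) (P2 : bMeetSemilatticeType d2) (f : P1 -> P2).
Hypothesis emb : semilattice_embedding f.
Hypothesis pres : preserves_finite_covers f.
Hypothesis key : forall x : P2, (exists z : P1, x <= f z) ->
     exists (y : P1) (ys : seq P1),
       x <= f y /\
       (forall yi, yi \in ys -> yi <= y /\ f yi `&` x = \bot) /\
       finite_cover (f y) (rcons (map f ys) x).

Definition comp (xi : P2 -> Prop) : P1 -> Prop := fun a => xi (f a).

Lemma f_mono a b : a <= b -> f a <= f b.
Proof.
move=> /meet_idPl e; apply/meet_idPl; have [_ [fm _]] := emb; by rewrite -fm e.
Qed.

Lemma comp_filter xi a : is_filter xi -> xi (f a) -> is_filter (comp xi).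
Proof.
move=> fx xa; have [_ [fm fb]] := emb.
split; first by exists a.
split; first by exists \bot; rewrite /comp fb; exact: filter_bot.
split; first by move=> u v xu uv; exact: filter_up fx xu (f_mono uv).
by move=> u v xu xv; rewrite /comp fm; exact: filter_meet.
Qed.

Lemma comp_tight xi a : is_tight xi -> xi (f a) -> is_tight (comp xi).
Proof.
move=> tx xa; split; first exact: comp_filter (proj1 tx) xa.
move=> O' [hO oO'] O'c.
have [b [bs [[cb cbs] sub]]] := oO' _ O'c.
have [c [cn [cb' cbs']]] : exists c, c != \bot /\ c <= b /\ forall bi, bi \in bs -> c `&` bi = \bot.
  apply: NNPP => nex.
  have cov : finite_cover b (map (fun bi => b `&` bi) bs).
    split; first by move=> c /mapP [bi _ ->]; exact: leIl.
    move=> y yn yb; apply: NNPP => nc; apply: nex; exists y; split=> //; split=> // bi bibs.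
    apply/eqP; apply: negbNE; apply/negP => h; apply: nc; exists (b `&` bi).
      by apply/mapP; exists bi.
    by rewrite meetA (meet_idPl yb).
  have [c' /mapP [c'' /mapP [bi bibs ->] ->] xc] := tight_cover tx cb (pres cov).
  apply: (cbs bi bibs); exact: filter_up (proj1 tx) xc (f_mono (leIr _ _)).
have [H [uH cH]] := ultra_exists (principal_filter cn).
exists H; split=> //; apply: sub; first exact: proj1 uH.
split; first by apply: cH.
move=> bi bibs Hbi; apply: (filter_bot (proj1 uH)); rewrite -(cbs' bi bibs).
by apply: filter_meet (proj1 uH) _ Hbi; apply: cH.
Qed.

Lemma re_basic a (as_ : seq P1) xi :
  Vbasic (f a) (map f as_) xi <-> is_tight xi /\ Vbasic a as_ (comp xi).
Proof.
split.
  move=> [[xa xn] tx]; split=> //; split; last exact: comp_tight tx xa.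
  split=> // y yas; apply: xn; apply/mapP; by exists y.
move=> [tx [[ca cn] _]]; split=> //; split=> // y /mapP [z zas ->]; exact: cn.
Qed.

Lemma Kl x a : x <= f a -> exists y ys, forall xi, is_tight xi ->
  (xi x <-> Vbasic y ys (comp xi)).
Proof.
move=> xa; have [y [ys [xy [hys cov]]]] := key (ex_intro _ a xa).
exists y, ys => xi tx; split.
  move=> xx; have xfy : xi (f y) := filter_up (proj1 tx) xx xy.
  split; last exact: comp_tight tx xfy.
  split=> // yi yis cyi.
  apply: (filter_bot (proj1 tx)); rewrite -(proj2 (hys yi yis)).
  exact: filter_meet (proj1 tx) cyi xx.
move=> [[cy cn] _].
have [c] := tight_cover tx cy cov.
rewrite mem_rcons inE => /orP [/eqP ->|/mapP [yi yis ->]] // xc.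
by case: (cn yi yis).
Qed.

Lemma Mex a b bs : exists M, forall xi, is_tight xi -> xi (f a) ->
  (Vbasic b bs xi <-> denote M (comp xi)).
Proof.
pose x := b `&` f a.
have step : forall bs : seq P2, exists M, forall xi, is_tight xi -> xi (f a) ->
    (denote M (comp xi) <-> xi x /\ forall bi, bi \in bs -> ~ xi (x `&` bi)).
  elim=> [|bi bs' [M' HM']].
    have [y [ys Hy]] := Kl (leIr (f a) b).
    exists [:: (y, ys)] => xi tx xa; split.
      move=> [p [[<-|[]] Vp]]; split=> //; exact/Hy.
    move=> [xx _]; exists (y, ys); split; first by left.
    exact/Hy.
  have [z [zs Hz]] := Kl (le_trans (leIl x bi) (leIr (f a) b)).
  exists (List.flat_map (fun p => (p.1, z :: p.2) :: List.map (fun zj => (p.1 `&` zj, p.2)) zs) M').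
  move=> xi tx xa; have tc := comp_tight tx xa.
  rewrite denote_compl // HM' //; split.
    move=> [[xx nb] nV]; split=> // bj; rewrite inE => /orP [/eqP ->|/nb //].
    by move/(Hz xi tx).
  move=> [xx nb]; split.
    by split=> // bj bjs; apply: nb; rewrite inE bjs orbT.
  by move/(Hz xi tx); apply: nb; rewrite mem_head.
have [M HM] := step bs; exists M => xi tx xa; rewrite HM //.
have fx := proj1 tx; split.
  move=> [[xb xbs] _]; split; first exact: filter_meet fx xb xa.
  move=> bi bibs xbi; apply: (xbs bi bibs).
  exact: filter_up fx xbi (leIr bi x).
move=> [xx nb]; split; last exact: tx.
split; first exact: filter_up fx xx (leIl b (f a)).
by move=> bi bibs xbi; apply: (nb bi bibs); exact: filter_meet fx xx xbi.
Qed.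

Lemma Nex (p : P1 * seq P1) (L2 : list (P2 * seq P2)) : exists N, forall xi, is_tight xi ->
  (Vbasic p.1 p.2 (comp xi) /\ denote L2 xi <-> denote N (comp xi)).
Proof.
elim: L2 => [|q L2 [N' HN']].
  exists [::] => xi tx; split; first by move=> [_ [r []]].
  by move=> [r []].
have [M HM] := Mex p.1 q.1 q.2.
exists (List.map (fun r => (r.1 `&` p.1, r.2 ++ p.2)) M ++ N') => xi tx.
rewrite denote_app denote_meet -HN' //; split.
  move=> [Vp [r [/= [<-|rL] Vr]]].
    by left; split=> //; apply/(HM xi tx (proj1 (proj1 Vp))).
  by right; split=> //; exists r.
move=> [[DM Vp]|[Vp [r [rL Vr]]]]; split=> //.
  exists q; split; first by left.
  by apply/(HM xi tx (proj1 (proj1 Vp))).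
by exists r; split=> //; right.
Qed.

Lemma Bigex (L1 : list (P1 * seq P1)) (L2 : list (P2 * seq P2)) : exists Big, forall xi, is_tight xi ->
  (denote L1 (comp xi) /\ denote L2 xi <-> denote Big (comp xi)).
Proof.
elim: L1 => [|p L1 [B' HB']].
  by exists [::] => xi tx; split; [move=> [[r []]]|move=> [r []]].
have [N HN] := Nex p L2.
exists (N ++ B') => xi tx; rewrite denote_app -HN // -HB' //; split.
  move=> [[r [/= [<-|rL] Vr]] D2]; first by left.
  by right; split=> //; exists r.
move=> [[Vp D2]|[[r [rL Vr]] D2]]; split=> //.
  by exists p; split=> //; left.
by exists r; split=> //; right.
Qed.

End Emb.
Unset Implicit Arguments.
Set Strict Implicit.

Theorem mainTheorem9 (d1 d2 : Order.disp_t)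
  (P1 : bMeetSemilatticeType d1) (P2 : bMeetSemilatticeType d2)
  (f : P1 -> P2) :
  semilattice_embedding f ->
  preserves_finite_covers f ->
  (forall x : P2, (exists z : P1, x <= f z) ->
     exists (y : P1) (ys : seq P1),
       x <= f y /\
       (forall yi, yi \in ys -> yi <= y /\ f yi `&` x = \bot) /\
       finite_cover (f y) (rcons (map f ys) x)) ->
  is_ideal_Tc (in_re_image f).
Proof.
move=> emb pres key.
pose mapL (L : list (P1 * seq P1)) := List.map (fun p => (f p.1, map f p.2)) L.
have re_den : forall L xi, re_preimage f (denote L) xi <-> denote (mapL L) xi.
  move=> L xi; split.
    move=> [tx [_ [p [pL Vp]]]]; exists (f p.1, map f p.2); split.
      by apply/List.in_map_iff; exists p.
    by apply: (proj2 (re_basic emb pres p.1 p.2 xi)); split.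
  move=> [q [/List.in_map_iff [p [<- pL]] Vq]].
  have [tx Vp] := (proj1 (re_basic emb pres p.1 p.2 xi) Vq).
  split=> //; split; first by exists p.1; exact: (proj1 (proj1 Vq)).
  by exists p.
have decomp : forall U : fset P1, Tc U -> exists L, U = denote L.
  move=> U TU; have [L HL] := Tc_decomp TU; exists L; exact: fset_eq.
split.
  move=> W [U [TU eW]]; have [L eU] := decomp U TU; subst U.
  have -> : W = denote (mapL L) by apply: fset_eq => xi; rewrite eW re_den.
  exact: Tc_denote.
split.
  move=> W1 W2 [U1 [T1 e1]] [U2 [T2 e2]].
  have [L1 eU1] := decomp U1 T1; have [L2 eU2] := decomp U2 T2; subst U1 U2.
  exists (denote (L1 ++ L2)); split; first exact: Tc_denote.
  move=> xi; rewrite e1 e2 !re_den /mapL List.map_app denote_app //.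
move=> W V [U [TU eW]] TV.
have [L1 eU] := decomp U TU; have [L2 HV] := Tc_decomp TV.
have eV : V = denote L2 by exact: fset_eq.
subst U V.
have [Big HB] := Bigex emb pres key L1 L2.
exists (denote Big); split; first exact: Tc_denote.
move=> xi; rewrite eW; split.
  move=> [[tx [ex D1]] D2]; split=> //; split=> //.
  by apply/(HB xi tx); split.
move=> [tx [ex DB]]; have [D1 D2] := proj2 (HB xi tx) DB.
by split=> //; split.
Qed.
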